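(* Let $n\ge2$, $t_1<\dots<t_n$, and for $j=1,\dots,n-1$ let $\lambda_{0,j}\le\lambda_{1,j}$ be real. For $f\in C^2[t_1,t_n]$ let $I_2(f)$ be the continuous function on $[t_1,t_n]$ whose restriction to each $[t_j,t_{j+1}]$ lies in $E(\lambda_{0,j},\lambda_{1,j})$ and which satisfies $I_2(f)(t_j)=f(t_j)$ for $j=1,\dots,n$. Then $$\|f-I_2(f)\|_{[t_1,t_n]}\le\max_{1\le j\le n-1}M^{t_j,t_{j+1}}_{\lambda_{0,j},\lambda_{1,j}}\cdot\max_{1\le j\le n-1}\max_{\theta\in[t_j,t_{j+1}]}\left|L_{(\lambda_{0,j},\lambda_{1,j})}f(\theta)\right|.$$
   Context: $\|g\|_{[a,b]}=\max_{t\in[a,b]}|g(t)|$. For real $\lambda_0,\dots,\lambda_N$, $L_{(\lambda_0,\dots,\lambda_N)}=\prod_{j=0}^N(\frac{d}{dt}-\lambda_j)$ and $E(\lambda_0,\dots,\lambda_N)=\{f\in C^{N+1}(\mathbb{R}):L_{(\lambda_0,\dots,\lambda_N)}f=0\}$. For real $\mu_0,\mu_1$ and $a<b$, $\Omega^{a,b}_{\mu_0,\mu_1,0}$ denotes the unique $u\in E(\mu_0,\mu_1,0)$ with $u(a)=u(b)=0$ and $L_{(\mu_0,\mu_1)}u\equiv-1$, and $M^{a,b}_{\mu_0,\mu_1}:=\max_{t\in[a,b]}|\Omega^{a,b}_{\mu_0,\mu_1,0}(t)|$. *)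

(* Defs.v *)
From Stdlib Require Import Reals Lra List.
From Coquelicot Require Import Coquelicot.
Open Scope R_scope.

Fixpoint Lop (ls : list R) (f : R -> R) : R -> R :=
  match ls with
  | nil => f
  | l :: ls' => fun x => Derive (Lop ls' f) x - l * Lop ls' f x
  end.

Definition CkR (m : nat) (f : R -> R) : Prop :=
  (forall (k : nat) (x : R), (k < m)%nat -> ex_derive (Derive_n f k) x) /\
  (forall x, continuous (Derive_n f m) x).

Definition inE (ls : list R) (f : R -> R) : Prop :=
  CkR (length ls) f /\ forall x, Lop ls f x = 0.

Definition Omega_spec (a b m0 m1 : R) (u : R -> R) : Prop :=
  inE (m0 :: m1 :: 0 :: nil) u /\ u a = 0 /\ u b = 0 /\
  (forall x, Lop (m0 :: m1 :: nil) u x = -1).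

Definition sup_on (a b : R) (F : R -> R) : R :=
  real (Lub_Rbar (fun y => exists t, a <= t <= b /\ y = F t)).

(* M^{a,b}_{m0,m1} = max_{t in [a,b]} |Omega^{a,b}_{m0,m1,0}(t)| *)
Definition Mconst (a b m0 m1 : R) : R :=
  real (Lub_Rbar (fun y => exists u, Omega_spec a b m0 m1 u /\
                     exists t, a <= t <= b /\ y = Rabs (u t))).

Definition maxj (n : nat) (F : nat -> R) : R :=
  fold_right Rmax (F 1%nat) (map F (seq 1 (n - 1))).

Definition deriv_on (a b : R) (g dg : R -> R) : Prop :=
  forall x, a <= x <= b -> forall eps, 0 < eps -> exists delta, 0 < delta /\
    forall y, a <= y <= b -> 0 < Rabs (y - x) < delta ->
      Rabs ((g y - g x) / (y - x) - dg x) < eps.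

Definition cont_on (a b : R) (g : R -> R) : Prop :=
  forall x, a <= x <= b -> forall eps, 0 < eps -> exists delta, 0 < delta /\
    forall y, a <= y <= b -> Rabs (y - x) < delta -> Rabs (g y - g x) < eps.

(* Main.v *)
Require Import Defs.
From Stdlib Require Import Reals Lra Lia List FunctionalExtensionality.
From Coquelicot Require Import Coquelicot.
Open Scope R_scope.

Lemma d_plus f g x df dg : is_derive f x df -> is_derive g x dg -> is_derive (fun y => f y + g y) x (df + dg).
Proof. intros; apply (is_derive_plus f g x df dg); auto. Qed.
Lemma d_minus f g x df dg : is_derive f x df -> is_derive g x dg -> is_derive (fun y => f y - g y) x (df - dg).
Proof. intros; apply (is_derive_minus f g x df dg); auto. Qed.
Lemma d_mult f g x df dg : is_derive f x df -> is_derive g x dg -> is_derive (fun y => f y * g y) x (df * g x + f x * dg).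
Proof. intros; apply (is_derive_mult f g x df dg); auto. intros; apply Rmult_comm. Qed.
Lemma d_const (c x : R) : is_derive (fun _ => c) x 0.
Proof. apply (is_derive_const c x). Qed.
Lemma d_id (x : R) : is_derive (fun y => y) x 1.
Proof. apply (is_derive_id x). Qed.
Lemma d_eq (f : R -> R) (x l l' : R) : is_derive f x l -> l = l' -> is_derive f x l'.
Proof. intros H ->; exact H. Qed.
Lemma d_exp (c x : R) : is_derive (fun y => exp (c*y)) x (c * exp (c*x)).
Proof. auto_derive; [auto| ring]. Qed.

Definition clamp (a b x : R) := Rmax a (Rmin b x).
Lemma clamp_in a b x : a <= b -> a <= clamp a b x <= b.
Proof. intros; unfold clamp, Rmax, Rmin; repeat destruct Rle_dec; lra. Qed.
Lemma clamp_id a b x : a <= x <= b -> clamp a b x = x.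
Proof. intros; unfold clamp, Rmax, Rmin; repeat destruct Rle_dec; lra. Qed.
Lemma clamp_lip a b x y : a <= b -> Rabs (clamp a b y - clamp a b x) <= Rabs (y - x).
Proof. intros; unfold clamp, Rmax, Rmin; repeat destruct Rle_dec; unfold Rabs; repeat destruct Rcase_abs; lra. Qed.

Lemma cont_ext a b g : a <= b -> cont_on a b g -> forall x, continuity_pt (fun y => g (clamp a b y)) x.
Proof.
  intros Hab Hc x. unfold continuity_pt, continue_in, limit1_in, limit_in. simpl. unfold R_dist.
  intros eps Heps. destruct (Hc (clamp a b x) (clamp_in a b x Hab) eps Heps) as [d [Hd H]].
  exists d; split; auto. intros y [_ Hy]. apply H. apply clamp_in; auto.
  eapply Rle_lt_trans; [apply clamp_lip; auto| auto].
Qed.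

Lemma deriv_cont a b g dg : deriv_on a b g dg -> cont_on a b g.
Proof.
  intros H x Hx eps Heps. destruct (H x Hx 1 Rlt_0_1) as [d [Hd Hy]].
  set (k := Rabs (dg x) + 1).
  assert (Hk : 0 < k) by (unfold k; pose proof (Rabs_pos (dg x)); lra).
  exists (Rmin d (eps / k)). split. apply Rmin_pos; auto. apply Rdiv_lt_0_compat; auto.
  intros y Hy1 Hy2. destruct (Req_dec y x) as [->|Hne].
  - rewrite Rminus_eq_0, Rabs_R0; auto.
  - assert (H0 : 0 < Rabs (y - x)) by (apply Rabs_pos_lt; lra).
    assert (Hq := Hy y Hy1 (conj H0 (Rlt_le_trans _ _ _ Hy2 (Rmin_l _ _)))).
    set (q := (g y - g x) / (y - x)) in Hq.
    assert (E : g y - g x = q * (y - x)) by (unfold q; field; lra).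
    rewrite E, Rabs_mult.
    assert (Rabs q <= k).
    { unfold k. replace q with ((q - dg x) + dg x) by ring.
      eapply Rle_trans; [apply Rabs_triang|]. lra. }
    assert (Rabs (y - x) < eps / k) by (eapply Rlt_le_trans; [apply Hy2| apply Rmin_r]).
    apply Rle_lt_trans with (k * Rabs (y - x)).
    + apply Rmult_le_compat_r; auto. apply Rabs_pos.
    + apply (Rmult_lt_compat_l k) in H2; auto. replace (k * (eps / k)) with eps in H2 by (field; lra). auto.
Qed.

Lemma deriv_is_derive a b g dg x : deriv_on a b g dg -> a < x < b -> is_derive g x (dg x).
Proof.
  intros H Hx. apply is_derive_Reals. intros eps Heps.
  destruct (H x (conj (Rlt_le _ _ (proj1 Hx)) (Rlt_le _ _ (proj2 Hx))) eps Heps) as [d [Hd Hy]].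
  assert (Hp : 0 < Rmin d (Rmin (x - a) (b - x))) by (repeat apply Rmin_pos; lra).
  exists (mkposreal _ Hp). intros h Hh Hh2. simpl in Hh2.
  pose proof (Rmin_l d (Rmin (x - a) (b - x))). pose proof (Rmin_r d (Rmin (x - a) (b - x))).
  pose proof (Rmin_l (x - a) (b - x)). pose proof (Rmin_r (x - a) (b - x)).
  assert (Hb : -h <= Rabs h /\ h <= Rabs h) by (split; [rewrite <- Rabs_Ropp; apply RRle_abs| apply RRle_abs]).
  specialize (Hy (x + h)).
  replace (x + h - x) with h in Hy by ring. apply Hy.
  - lra.
  - split; [apply Rabs_pos_lt; auto| lra].
Qed.

Lemma deriv_sub a b c d g dg : a <= c -> d <= b -> deriv_on a b g dg -> deriv_on c d g dg.
Proof.
  intros H1 H2 H x Hx eps Heps. destruct (H x ltac:(lra) eps Heps) as [de [Hde Hy]].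
  exists de; split; auto. intros y Hy1 Hy2; apply Hy; auto; lra.
Qed.
Lemma cont_sub a b c d g : a <= c -> d <= b -> cont_on a b g -> cont_on c d g.
Proof.
  intros H1 H2 H x Hx eps Heps. destruct (H x ltac:(lra) eps Heps) as [de [Hde Hy]].
  exists de; split; auto. intros y Hy1 Hy2; apply Hy; auto; lra.
Qed.

Lemma ext_derive a b g dg x : deriv_on a b g dg -> a < x < b -> is_derive (fun y => g (clamp a b y)) x (dg x).
Proof.
  intros H Hx. apply is_derive_ext_loc with g; [| eapply deriv_is_derive; eauto].
  assert (Hp : 0 < Rmin (x - a) (b - x)) by (apply Rmin_pos; lra).
  exists (mkposreal _ Hp). intros y Hy. simpl in Hy. unfold ball in Hy; simpl in Hy; unfold AbsRing_ball in Hy; simpl in Hy.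
  pose proof (Rmin_l (x - a) (b - x)). pose proof (Rmin_r (x - a) (b - x)).
  unfold abs, minus, plus, opp in Hy; simpl in Hy.
  assert (Hb : -(y + - x) <= Rabs (y + - x) /\ y + - x <= Rabs (y + - x)) by (split; [rewrite <- Rabs_Ropp; apply RRle_abs| apply RRle_abs]).
  rewrite clamp_id; auto; lra.
Qed.

Lemma mvt_strict f df a b : a < b -> (forall x, a < x < b -> is_derive f x (df x)) ->
  (forall x, a <= x <= b -> continuity_pt f x) -> exists c, a < c < b /\ f b - f a = df c * (b - a).
Proof.
  intros Hab Hd Hc.
  set (pr1 := fun c (P : a < c < b) => exist (fun l => derivable_pt_abs f c l) (df c) (proj1 (is_derive_Reals _ _ _) (Hd c P))).
  destruct (MVT f id a b pr1 (fun c _ => derivable_pt_id c) Hab Hc (fun c _ => derivable_continuous_pt _ _ (derivable_pt_id c))) as [c [P E]].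
  exists c; split; auto. rewrite derive_pt_id in E. simpl in E. unfold id in E. lra.
Qed.

Lemma derive_cont (f : R -> R) x l : is_derive f x l -> continuity_pt f x.
Proof. intros H. apply derivable_continuous_pt. exists l. apply is_derive_Reals; auto. Qed.

Lemma MP a b mu nu (w w1 w2 : R -> R) : a < b -> (forall x, a <= x <= b -> continuity_pt w x) ->
  w a = 0 -> w b = 0 -> (forall x, a < x < b -> is_derive w x (w1 x)) ->
  (forall x, a < x < b -> is_derive w1 x (w2 x)) ->
  (forall x, a < x < b -> w2 x - (mu + nu) * w1 x + mu * nu * w x <= 0) ->
  forall x, a <= x <= b -> 0 <= w x.
Proof.
  intros Hab Hc Ha Hb Hd1 Hd2 HL x0 Hx0.
  destruct (Rle_dec 0 (w x0)) as [|Hn]; auto. exfalso.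
  assert (Hx : a < x0 < b).
  { split; destruct (Req_dec x0 a); destruct (Req_dec x0 b); subst; try lra. }
  set (V := fun y => exp (-nu*y) * w y).
  set (V1 := fun y => exp (-nu*y) * (w1 y - nu * w y)).
  set (phi := fun y => exp (-mu*y) * (w1 y - nu * w y)).
  set (phi1 := fun y => exp (-mu*y) * (w2 y - (mu + nu) * w1 y + mu * nu * w y)).
  assert (HV : forall y, a < y < b -> is_derive V y (V1 y)).
  { intros y Hy. unfold V, V1. eapply d_eq. apply d_mult. apply d_exp. apply Hd1; auto. cbv beta; ring. }
  assert (Hphi : forall y, a < y < b -> is_derive phi y (phi1 y)).
  { intros y Hy. unfold phi, phi1. eapply d_eq. apply d_mult. apply d_exp.
    apply d_minus. apply Hd2; auto. apply is_derive_scal. apply Hd1; auto. cbv beta; ring. }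
  assert (HVc : forall y, a <= y <= b -> continuity_pt V y).
  { intros y Hy. unfold V. apply (continuity_pt_mult (fun y => exp (-nu*y)) w).
    eapply derive_cont; apply d_exp. auto. }
  destruct (mvt_strict V V1 a x0) as [c1 [Hc1 E1]]; [lra| intros; apply HV; lra| intros; apply HVc; lra|].
  destruct (mvt_strict V V1 x0 b) as [c2 [Hc2 E2]]; [lra| intros; apply HV; lra| intros; apply HVc; lra|].
  assert (Hw0 : V x0 < 0). { unfold V. pose proof (exp_pos (-nu*x0)). nra. }
  assert (HVa : V a = 0) by (unfold V; rewrite Ha; ring).
  assert (HVb : V b = 0) by (unfold V; rewrite Hb; ring).
  assert (P1 : phi c1 < 0).
  { assert (V1 c1 < 0) by nra. unfold V1, phi in *. pose proof (exp_pos (-nu*c1)). pose proof (exp_pos (-mu*c1)). nra. }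
  assert (P2 : phi c2 > 0).
  { assert (V1 c2 > 0) by nra. unfold V1, phi in *. pose proof (exp_pos (-nu*c2)). pose proof (exp_pos (-mu*c2)). nra. }
  destruct (mvt_strict phi phi1 c1 c2) as [c [Hcc E]]; [lra| intros; apply Hphi; lra| intros; eapply derive_cont; apply Hphi; lra|].
  assert (phi1 c <= 0).
  { unfold phi1. pose proof (exp_pos (-mu*c)). assert (HH := HL c ltac:(lra)). nra. }
  nra.
Qed.

Definition expint (c x : R) := if Req_EM_T c 0 then x else (exp (c*x) - 1)/c.
Definition Fint (a b x : R) :=
  if Req_EM_T b 0 then (if Req_EM_T a 0 then x*x/2 else (x*exp(a*x) - expint a x)/a)
  else (expint (a+b) x - expint a x)/b.

Lemma d_expint c x : is_derive (expint c) x (exp (c*x)).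
Proof.
  unfold expint. destruct (Req_EM_T c 0) as [->|Hc].
  - eapply d_eq. apply d_id. rewrite Rmult_0_l, exp_0; auto.
  - auto_derive; auto. field; auto.
Qed.

Lemma d_Fint a b x : is_derive (Fint a b) x (exp (a*x) * expint b x).
Proof.
  unfold Fint. destruct (Req_EM_T b 0) as [->|Hb].
  - unfold expint at 2. destruct (Req_EM_T 0 0) as [_|]; [|lra].
    destruct (Req_EM_T a 0) as [->|Ha].
    + auto_derive; auto. rewrite Rmult_0_l, exp_0; field.
    + apply is_derive_ext with (fun y => (y * exp (a*y) - expint a y) / a); [auto|].
      eapply d_eq. apply (is_derive_scal_l (K:=R_AbsRing) (V:=R_NormedModule)) with (k := / a).
      apply d_minus. apply d_mult. apply d_id. apply d_exp. apply d_expint.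
      cbv beta. unfold scal; simpl. unfold mult; simpl. field. auto.
  - apply is_derive_ext with (fun y => (expint (a+b) y - expint a y) * / b); [auto|].
    eapply d_eq. apply d_mult. apply d_minus; apply d_expint. apply d_const.
    cbv beta. unfold expint. destruct (Req_EM_T b 0); [lra|].
    replace ((a+b)*x) with (a*x + b*x) by ring. rewrite exp_plus. field; auto.
Qed.

Lemma expint_neq c A B : A < B -> expint c B - expint c A <> 0.
Proof.
  intros HAB. unfold expint. destruct (Req_EM_T c 0); [lra|]. intro H.
  assert (exp (c*B) = exp (c*A)).
  { apply (Rmult_eq_compat_l c) in H. field_simplify in H; auto. lra. }
  apply exp_inv in H0. apply Rmult_eq_reg_l in H0; auto. lra.
Qed.

Definition D1f (O Q : R -> R) (mu nu : R) x := nu * O x + Q x.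
Definition D2f (O Q : R -> R) (mu nu : R) x := nu * D1f O Q mu nu x + (mu * Q x - 1).
Definition D3f (O Q : R -> R) (mu nu : R) x := nu * D2f O Q mu nu x + mu * (mu * Q x - 1).
Arguments D1f : simpl never. Arguments D2f : simpl never. Arguments D3f : simpl never.

Lemma ode_spec (O Q : R -> R) mu nu A B :
  (forall x, is_derive O x (nu * O x + Q x)) -> (forall x, is_derive Q x (mu * Q x - 1)) ->
  O A = 0 -> O B = 0 -> Omega_spec A B mu nu O.
Proof.
  intros HO HQ HA HB.
  assert (HD1 : forall x, is_derive (D1f O Q mu nu) x (D2f O Q mu nu x)).
  { intros x. unfold D1f, D2f. eapply d_eq. apply d_plus. apply is_derive_scal, HO. apply HQ.
    unfold D1f; ring. }
  assert (HD2 : forall x, is_derive (D2f O Q mu nu) x (D3f O Q mu nu x)).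
  { intros x. unfold D2f, D3f. eapply d_eq. apply d_plus. apply is_derive_scal, HD1.
    apply d_minus. apply is_derive_scal, HQ. apply d_const. ring. }
  assert (HD3 : forall x, ex_derive (D3f O Q mu nu) x).
  { intros x. unfold D3f. eexists. apply d_plus. apply is_derive_scal, HD2.
    apply is_derive_scal. apply d_minus. apply is_derive_scal, HQ. apply d_const. }
  assert (E0 : Derive O = D1f O Q mu nu).
  { apply functional_extensionality; intro x. apply is_derive_unique, HO. }
  assert (E1 : Derive (D1f O Q mu nu) = D2f O Q mu nu).
  { apply functional_extensionality; intro x. apply is_derive_unique, HD1. }
  assert (E2 : Derive (D2f O Q mu nu) = D3f O Q mu nu).
  { apply functional_extensionality; intro x. apply is_derive_unique, HD2. }
  assert (N0 : Derive_n O 0 = O) by (apply functional_extensionality; reflexivity).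
  assert (N1 : Derive_n O 1 = D1f O Q mu nu).
  { apply functional_extensionality; intro x. simpl. rewrite <- E0. reflexivity. }
  assert (N2 : Derive_n O 2 = D2f O Q mu nu).
  { apply functional_extensionality; intro x. change (Derive (Derive_n O 1) x = D2f O Q mu nu x).
    rewrite N1, E1; auto. }
  assert (N3 : Derive_n O 3 = D3f O Q mu nu).
  { apply functional_extensionality; intro x. change (Derive (Derive_n O 2) x = D3f O Q mu nu x).
    rewrite N2, E2; auto. }
  assert (L0 : Lop (0 :: nil) O = D1f O Q mu nu).
  { apply functional_extensionality; intro x. simpl. rewrite E0. unfold D1f. ring. }
  assert (L1 : Lop (nu :: 0 :: nil) O = fun x => mu * Q x - 1).
  { apply functional_extensionality; intro x. change (Derive (Lop (0::nil) O) x - nu * Lop (0::nil) O x = mu * Q x - 1).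
    rewrite L0, E1. unfold D2f. ring. }
  assert (L2 : Lop (nu :: nil) O = Q).
  { apply functional_extensionality; intro x. simpl. rewrite E0. unfold D1f. ring. }
  split; [split; [split|]|].
  - intros k x Hk. destruct k as [|[|[|k]]]; try (simpl length in Hk; lia).
    + rewrite N0. eexists; apply HO.
    + rewrite N1. eexists; apply HD1.
    + rewrite N2. eexists; apply HD2.
  - intros x. simpl length. rewrite N3. apply (ex_derive_continuous (K:=R_AbsRing) (V:=R_NormedModule)), HD3.
  - intros x. change (Derive (Lop (nu :: 0 :: nil) O) x - mu * Lop (nu :: 0 :: nil) O x = 0).
    rewrite L1. rewrite (is_derive_unique _ x (mu * (mu * Q x - 1))). ring.
    eapply d_eq. apply d_minus. apply is_derive_scal, HQ. apply d_const. ring.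
  - split; auto. split; auto. intros x.
    change (Derive (Lop (nu :: nil) O) x - mu * Lop (nu :: nil) O x = -1).
    rewrite L2, (is_derive_unique _ _ _ (HQ x)). ring.
Qed.

Lemma Omega_exists A B mu nu : A < B -> exists u, Omega_spec A B mu nu u.
Proof.
  intros Hab.
  set (dd := mu - nu).
  set (cc := (Fint dd (-mu) B - Fint dd (-mu) A) / (expint dd B - expint dd A)).
  set (G := fun x => cc * expint dd x - Fint dd (-mu) x).
  exists (fun x => exp (nu*x) * (G x - G A)).
  apply ode_spec with (Q := fun x => exp (mu*x) * (cc - expint (-mu) x)).
  - intros x. eapply d_eq. apply d_mult. apply d_exp. apply d_minus.
    unfold G. apply d_minus. apply is_derive_scal, d_expint. apply d_Fint. apply d_const.
    cbv beta.
    assert (exp (mu*x) = exp (nu*x) * exp (dd*x)) by (rewrite <- exp_plus; f_equal; unfold dd; ring).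
    rewrite H. ring.
  - intros x. eapply d_eq. apply d_mult. apply d_exp. apply d_minus. apply d_const. apply d_expint.
    cbv beta. assert (exp (mu*x) * exp (-mu*x) = 1) by (rewrite <- exp_plus; replace (mu*x + -mu*x) with 0 by ring; apply exp_0).
    replace (mu * exp (mu * x) * (cc - expint (- mu) x) + exp (mu * x) * (0 - exp (- mu * x)))
      with (mu * (exp (mu * x) * (cc - expint (- mu) x)) - exp (mu * x) * exp (- mu * x)) by ring.
    rewrite H. ring.
  - cbv beta. ring.
  - cbv beta. unfold G, cc. pose proof (expint_neq dd A B Hab). field_simplify; auto. unfold Rdiv; ring.
Qed.

Lemma Lop2 (mu nu : R) (u : R -> R) : (forall x, ex_derive u x) -> (forall x, ex_derive (Derive u) x) ->
  forall x, Lop (mu :: nu :: nil) u x = Derive (Derive u) x - (mu + nu) * Derive u x + mu * nu * u x.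
Proof.
  intros H1 H2 x. change (Derive (fun y => Derive u y - nu * u y) x - mu * (Derive u x - nu * u x) =
     Derive (Derive u) x - (mu + nu) * Derive u x + mu * nu * u x).
  rewrite (is_derive_unique _ x (Derive (Derive u) x - nu * Derive u x)). ring.
  apply d_minus. apply Derive_correct, H2. apply is_derive_scal, Derive_correct, H1.
Qed.

Lemma spec_d1 A B mu nu u : Omega_spec A B mu nu u -> forall x, ex_derive u x.
Proof. intros [[[H _] _] _] x. exact (H 0%nat x ltac:(simpl; lia)). Qed.
Lemma spec_d2 A B mu nu u : Omega_spec A B mu nu u -> forall x, ex_derive (Derive u) x.
Proof. intros [[[H _] _] _] x. exact (H 1%nat x ltac:(simpl; lia)). Qed.

Lemma Om_unique A B mu nu u O : A < B -> Omega_spec A B mu nu u -> Omega_spec A B mu nu O ->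
  forall x, A <= x <= B -> u x = O x.
Proof.
  intros Hab Hu HO.
  assert (G : forall s, (s = 1 \/ s = -1) -> forall x, A <= x <= B -> 0 <= s * (u x - O x)).
  { intros s Hs. apply (MP A B mu nu (fun x => s * (u x - O x))
       (fun x => s * (Derive u x - Derive O x)) (fun x => s * (Derive (Derive u) x - Derive (Derive O) x))); auto.
    - intros x _. eapply derive_cont. apply is_derive_scal. apply d_minus; apply Derive_correct; eapply spec_d1; eauto.
    - destruct Hu as [_ [H1 _]]; destruct HO as [_ [H2 _]]. rewrite H1, H2; ring.
    - destruct Hu as [_ [_ [H1 _]]]; destruct HO as [_ [_ [H2 _]]]. rewrite H1, H2; ring.
    - intros x _. apply is_derive_scal. apply d_minus; apply Derive_correct; eapply spec_d1; eauto.
    - intros x _. apply is_derive_scal. apply d_minus; apply Derive_correct; eapply spec_d2; eauto.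
    - intros x _. pose proof (Lop2 mu nu u (spec_d1 _ _ _ _ _ Hu) (spec_d2 _ _ _ _ _ Hu) x).
      pose proof (Lop2 mu nu O (spec_d1 _ _ _ _ _ HO) (spec_d2 _ _ _ _ _ HO) x).
      destruct Hu as [_ [_ [_ Hu]]]; destruct HO as [_ [_ [_ HO]]].
      rewrite Hu in H. rewrite HO in H0. nra. }
  intros x Hx. pose proof (G 1 (or_introl eq_refl) x Hx). pose proof (G (-1) (or_intror eq_refl) x Hx). lra.
Qed.

Lemma lub_ge (E : R -> Prop) y Bd : E y -> (forall z, E z -> z <= Bd) -> y <= real (Lub_Rbar E).
Proof.
  intros Hy Hb. destruct (Lub_Rbar_correct E) as [ub lub].
  assert (Hle : Rbar_le (Lub_Rbar E) Bd) by (apply lub; intros z Hz; simpl; apply Hb; auto).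
  specialize (ub y Hy). destruct (Lub_Rbar E); simpl in *; auto; contradiction.
Qed.

Lemma lub_le (E : R -> Prop) Bd : (forall z, E z -> z <= Bd) -> 0 <= Bd -> real (Lub_Rbar E) <= Bd.
Proof.
  intros Hb H0. destruct (Lub_Rbar_correct E) as [ub lub].
  assert (Hle : Rbar_le (Lub_Rbar E) Bd) by (apply lub; intros z Hz; simpl; apply Hb; auto).
  destruct (Lub_Rbar E); simpl in *; auto; contradiction.
Qed.

Lemma Mconst_ge A B mu nu u t : A < B -> Omega_spec A B mu nu u -> A <= t <= B -> Rabs (u t) <= Mconst A B mu nu.
Proof.
  intros Hab Hu Ht. destruct (Omega_exists A B mu nu Hab) as [O HO].
  destruct (continuity_ab_maj (fun t => Rabs (O t)) A B ltac:(lra)) as [Mx [HM _]].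
  { intros c _. apply (continuity_pt_comp O Rabs). eapply derive_cont, Derive_correct, (spec_d1 _ _ _ _ _ HO).
    apply Rcontinuity_abs. }
  unfold Mconst. apply lub_ge with (Rabs (O Mx)).
  - exists u; split; auto. exists t; split; auto.
  - intros z [v [Hv [s [Hs ->]]]]. rewrite (Om_unique A B mu nu v O); auto.
Qed.

Lemma sup_on_ge a b F t : a <= b -> (forall x, continuity_pt (fun y => F (clamp a b y)) x) -> a <= t <= b -> F t <= sup_on a b F.
Proof.
  intros Hab Hc Ht. destruct (continuity_ab_maj (fun y => F (clamp a b y)) a b Hab) as [Mx [HM _]].
  { intros; apply Hc. }
  unfold sup_on. apply lub_ge with (F (clamp a b Mx)).
  - exists t; split; auto.
  - intros z [s [Hs ->]]. rewrite <- (clamp_id a b s) by auto. apply HM; auto.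
Qed.

Lemma cp_lin (g2 g1 g0 : R -> R) k1 k2 x : continuity_pt g2 x -> continuity_pt g1 x -> continuity_pt g0 x ->
  continuity_pt (fun y => Rabs (g2 y - k1 * g1 y + k2 * g0 y)) x.
Proof.
  intros H2 H1 H0. apply (continuity_pt_comp (fun y => g2 y - k1 * g1 y + k2 * g0 y) Rabs).
  - apply (continuity_pt_plus (fun y => g2 y - k1 * g1 y) (fun y => k2 * g0 y)).
    + apply (continuity_pt_minus g2 (fun y => k1 * g1 y)); auto.
      apply (continuity_pt_scal g1 k1); auto.
    + apply (continuity_pt_scal g0 k2); auto.
  - apply Rcontinuity_abs.
Qed.

Lemma K_cont a b mu nu f f1 f2 : a < b -> deriv_on a b f f1 -> deriv_on a b f1 f2 -> cont_on a b f2 ->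
  forall x, continuity_pt (fun y => (fun th => Rabs (f2 th - (mu + nu) * f1 th + mu * nu * f th)) (clamp a b y)) x.
Proof.
  intros Hab Hf Hf1 Hf2 x.
  apply (cp_lin (fun y => f2 (clamp a b y)) (fun y => f1 (clamp a b y)) (fun y => f (clamp a b y))).
  - apply cont_ext; auto; lra.
  - apply cont_ext; [lra|]. eapply deriv_cont; eauto.
  - apply cont_ext; [lra|]. eapply deriv_cont; eauto.
Qed.

Lemma interval a b mu nu f f1 f2 h : a < b -> deriv_on a b f f1 -> deriv_on a b f1 f2 -> cont_on a b f2 ->
  (forall x, ex_derive h x) -> (forall x, ex_derive (Derive h) x) -> (forall x, Lop (mu :: nu :: nil) h x = 0) ->
  f a = h a -> f b = h b -> forall x, a <= x <= b ->
  Rabs (f x - h x) <= Mconst a b mu nu * sup_on a b (fun th => Rabs (f2 th - (mu + nu) * f1 th + mu * nu * f th)).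
Proof.
  intros Hab Hf Hf1 Hf2 Hh1 Hh2 Hh Ha Hb x Hx.
  set (K := sup_on a b (fun th => Rabs (f2 th - (mu + nu) * f1 th + mu * nu * f th))).
  assert (HK : forall th, a <= th <= b -> Rabs (f2 th - (mu + nu) * f1 th + mu * nu * f th) <= K).
  { intros th Hth. apply (sup_on_ge a b (fun th => Rabs (f2 th - (mu + nu) * f1 th + mu * nu * f th))); auto. lra.
    apply K_cont; auto. }
  destruct (Omega_exists a b mu nu Hab) as [O HO].
  pose proof (Lop2 mu nu O (spec_d1 _ _ _ _ _ HO) (spec_d2 _ _ _ _ _ HO)) as LO.
  pose proof (Lop2 mu nu h Hh1 Hh2) as Lh.
  assert (HOd1 := spec_d1 _ _ _ _ _ HO). assert (HOd2 := spec_d2 _ _ _ _ _ HO).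
  destruct HO as [HOE [HOa [HOb HOL]]].
  assert (G : forall s, (s = 1 \/ s = -1) -> forall x, a <= x <= b -> 0 <= K * O x + s * (f (clamp a b x) - h x)).
  { intros s Hs. apply (MP a b mu nu (fun x => K * O x + s * (f (clamp a b x) - h x))
       (fun x => K * Derive O x + s * (f1 x - Derive h x)) (fun x => K * Derive (Derive O) x + s * (f2 x - Derive (Derive h) x))); auto.
    - intros y Hy. apply (continuity_pt_plus (fun x => K * O x) (fun x => s * (f (clamp a b x) - h x))).
      + apply (continuity_pt_scal O K). eapply derive_cont, Derive_correct, HOd1.
      + apply (continuity_pt_scal (fun x => (f (clamp a b x) - h x)) s).
        apply (continuity_pt_minus (fun x => f (clamp a b x)) h).
        apply cont_ext; [lra|]. eapply deriv_cont; eauto.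
        eapply derive_cont, Derive_correct, Hh1.
    - rewrite HOa, clamp_id, Ha by lra. ring.
    - rewrite HOb, clamp_id, Hb by lra. ring.
    - intros y Hy. apply d_plus. apply is_derive_scal, Derive_correct, HOd1.
      apply is_derive_scal. apply d_minus. apply (ext_derive a b f f1); auto. apply Derive_correct, Hh1.
    - intros y Hy. apply d_plus. apply is_derive_scal, Derive_correct, HOd2.
      apply is_derive_scal. apply d_minus. apply (deriv_is_derive a b f1 f2); auto. apply Derive_correct, Hh2.
    - intros y Hy. rewrite clamp_id by lra.
      specialize (LO y). specialize (Lh y). rewrite HOL in LO. rewrite Hh in Lh.
      specialize (HK y ltac:(lra)).
      assert (Hs2 : s * (f2 y - (mu + nu) * f1 y + mu * nu * f y) <= K).
      { destruct Hs as [->| ->]; eapply Rle_trans; [| apply HK| |apply HK].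
        rewrite Rmult_1_l; apply RRle_abs. rewrite <- Rabs_Ropp. replace (-1 * (f2 y - (mu + nu) * f1 y + mu * nu * f y)) with
           (- (f2 y - (mu + nu) * f1 y + mu * nu * f y)) by ring. apply RRle_abs. }
      nra. }
  pose proof (G 1 (or_introl eq_refl) x Hx). pose proof (G (-1) (or_intror eq_refl) x Hx).
  rewrite clamp_id in * by lra.
  assert (HK0 : 0 <= K) by (eapply Rle_trans; [apply Rabs_pos| apply (HK x Hx)]).
  assert (HM : Rabs (O x) <= Mconst a b mu nu) by (apply Mconst_ge; auto; split; auto).
  assert (O x <= Rabs (O x)) by apply RRle_abs.
  apply Rabs_le. split; nra.
Qed.

Lemma fold_max_ge l d y : In y l -> y <= fold_right Rmax d l.
Proof.
  induction l; simpl; [tauto|]. intros [->|H].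
  - apply Rmax_l.
  - eapply Rle_trans; [apply IHl; auto| apply Rmax_r].
Qed.

Lemma maxj_ge n F j : (1 <= j < n)%nat -> F j <= maxj n F.
Proof.
  intros Hj. unfold maxj. apply fold_max_ge. apply in_map. apply in_seq. lia.
Qed.

Lemma t_mono n (t : nat -> R) : (forall j, (1 <= j < n)%nat -> t j < t (S j)) ->
  forall i j, (1 <= i)%nat -> (i <= j <= n)%nat -> t i <= t j.
Proof.
  intros H i j Hi Hij. induction j.
  - lia.
  - destruct (Nat.eq_dec i (S j)) as [->|Hne]; [lra|].
    specialize (IHj ltac:(lia)). specialize (H j ltac:(lia)). lra.
Qed.

Lemma find_j n (t : nat -> R) x : (forall j, (1 <= j < n)%nat -> t j < t (S j)) ->
  forall m, (2 <= m <= n)%nat -> t 1%nat <= x <= t m -> exists j, (1 <= j < m)%nat /\ t j <= x <= t (S j).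
Proof.
  intros H m. induction m; intros Hm Hx; [lia|].
  destruct (Nat.eq_dec m 1) as [->|Hne].
  - exists 1%nat; split; [lia| auto].
  - destruct (Rle_dec x (t m)).
    + destruct IHm as [j [Hj1 Hj2]]; [lia| lra|]. exists j; split; [lia| auto].
    + exists m; split; [lia| lra].
Qed.

Theorem mainTheorem8 (n : nat) (t lam0 lam1 : nat -> R) (f f1 f2 g : R -> R) :
  (2 <= n)%nat ->
  (forall j, (1 <= j < n)%nat -> t j < t (S j)) ->
  (forall j, (1 <= j < n)%nat -> lam0 j <= lam1 j) ->
  deriv_on (t 1%nat) (t n) f f1 ->
  deriv_on (t 1%nat) (t n) f1 f2 ->
  cont_on (t 1%nat) (t n) f2 ->
  cont_on (t 1%nat) (t n) g ->
  (forall j, (1 <= j < n)%nat -> exists h, inE (lam0 j :: lam1 j :: nil) h /\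
      forall x, t j <= x <= t (S j) -> g x = h x) ->
  (forall j, (1 <= j <= n)%nat -> g (t j) = f (t j)) ->
  sup_on (t 1%nat) (t n) (fun x => Rabs (f x - g x)) <=
    maxj n (fun j => Mconst (t j) (t (S j)) (lam0 j) (lam1 j)) *
    maxj n (fun j => sup_on (t j) (t (S j))
        (fun th => Rabs (f2 th - (lam0 j + lam1 j) * f1 th + lam0 j * lam1 j * f th))).
Proof.
  intros Hn Ht Hlam Hf Hf1 Hf2 Hg Hh Hgf.
  set (MM := maxj n (fun j => Mconst (t j) (t (S j)) (lam0 j) (lam1 j))).
  set (KK := maxj n (fun j => sup_on (t j) (t (S j))
        (fun th => Rabs (f2 th - (lam0 j + lam1 j) * f1 th + lam0 j * lam1 j * f th)))).
  assert (Hsub : forall j, (1 <= j < n)%nat -> t 1%nat <= t j /\ t (S j) <= t n).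
  { intros j Hj. split; apply (t_mono n t Ht); lia. }
  assert (Hloc : forall j, (1 <= j < n)%nat ->
     deriv_on (t j) (t (S j)) f f1 /\ deriv_on (t j) (t (S j)) f1 f2 /\ cont_on (t j) (t (S j)) f2).
  { intros j Hj. destruct (Hsub j Hj). split; [|split].
    eapply deriv_sub; [| |apply Hf]; lra. eapply deriv_sub; [| |apply Hf1]; lra. eapply cont_sub; [| |apply Hf2]; lra. }
  assert (HM0 : forall j, (1 <= j < n)%nat -> 0 <= Mconst (t j) (t (S j)) (lam0 j) (lam1 j)).
  { intros j Hj. specialize (Ht j Hj). destruct (Omega_exists (t j) (t (S j)) (lam0 j) (lam1 j) Ht) as [O HO].
    eapply Rle_trans; [apply (Rabs_pos (O (t j)))| apply (Mconst_ge _ _ _ _ O (t j)); auto; lra]. }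
  assert (HK0 : forall j, (1 <= j < n)%nat -> 0 <= sup_on (t j) (t (S j))
        (fun th => Rabs (f2 th - (lam0 j + lam1 j) * f1 th + lam0 j * lam1 j * f th))).
  { intros j Hj. specialize (Ht j Hj). destruct (Hloc j Hj) as [A1 [A2 A3]].
    eapply Rle_trans; [apply (Rabs_pos (f2 (t j) - (lam0 j + lam1 j) * f1 (t j) + lam0 j * lam1 j * f (t j)))|].
    apply (sup_on_ge (t j) (t (S j)) (fun th => Rabs (f2 th - (lam0 j + lam1 j) * f1 th + lam0 j * lam1 j * f th))).
    lra. apply K_cont; auto. lra. }
  assert (HMM : 0 <= MM) by (unfold MM; eapply Rle_trans; [apply (HM0 1%nat); lia| apply (maxj_ge n (fun j => Mconst (t j) (t (S j)) (lam0 j) (lam1 j)) 1%nat); lia]).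
  assert (HKK : 0 <= KK) by (unfold KK; eapply Rle_trans; [apply (HK0 1%nat); lia| apply (maxj_ge n (fun j => sup_on (t j) (t (S j)) (fun th => Rabs (f2 th - (lam0 j + lam1 j) * f1 th + lam0 j * lam1 j * f th))) 1%nat); lia]).
  unfold sup_on at 1. apply lub_le; [| apply Rmult_le_pos; auto].
  intros z [x [Hx ->]].
  destruct (find_j n t x Ht n ltac:(lia) Hx) as [j [Hj Hxj]].
  destruct (Hh j Hj) as [h [[[Hck _] HL] Hgh]].
  destruct (Hloc j Hj) as [A1 [A2 A3]].
  rewrite (Hgh x Hxj).
  eapply Rle_trans.
  - apply (interval (t j) (t (S j)) (lam0 j) (lam1 j) f f1 f2 h); auto.
    + intros y. exact (Hck 0%nat y ltac:(simpl; lia)).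
    + intros y. exact (Hck 1%nat y ltac:(simpl; lia)).
    + rewrite <- (Hgh (t j)), Hgf; auto; [lia| specialize (Ht j Hj); lra].
    + specialize (Ht j Hj). rewrite <- (Hgh (t (S j))), Hgf; auto; [lia| lra].
  - apply Rmult_le_compat; auto.
    + apply (maxj_ge n (fun j => Mconst (t j) (t (S j)) (lam0 j) (lam1 j))); auto.
    + apply (maxj_ge n (fun j => sup_on (t j) (t (S j))
        (fun th => Rabs (f2 th - (lam0 j + lam1 j) * f1 th + lam0 j * lam1 j * f th)))); auto.
Qed.
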